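(* Let $\mathcal{X}=\{1,\dots,n\}$ and $\pi$ a probability mass function on $\mathcal{X}$ with full support and $\pi(1)\le\dots\le\pi(n)$. Fix $k\in\{1,\dots,n\}$, let $\mathcal{O}_i=\{i\}$ for $1\le i\le k-1$ and $\mathcal{O}_k=\{k,\dots,n\}$, and let $G$ be the Gibbs kernel of this partition. For $P\in\mathcal{S}(\pi)$, $D^\pi_{KL}(GPG\|\Pi)=0$ if and only if: (1) $P(x,y)=\pi(y)$ for all $x,y\in\{1,\dots,k-1\}$; (2) $\sum_{w\in\mathcal{O}_k}P(x,w)=\pi(\mathcal{O}_k)$ for all $x\in\{1,\dots,k-1\}$; (3) $\sum_{z\in\mathcal{O}_k}\pi(z)P(z,y)=\pi(\mathcal{O}_k)\pi(y)$ for all $y\in\{1,\dots,k-1\}$; (4) $\sum_{z,w\in\mathcal{O}_k}\pi(z)P(z,w)=\pi(\mathcal{O}_k)^2$. Equivalently, these conditions characterise $GPG=\Pi$.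
   Context: $\mathcal{S}(\pi)$ is the set of transition matrices $P$ with $\pi P=\pi$. $G(x,y)=\pi(y)/\pi(\mathcal{O}(x))$ if $y$ is in the block $\mathcal{O}(x)$ containing $x$, else $0$, with $\pi(A)=\sum_{z\in A}\pi(z)$. $\Pi$ is the matrix with all rows equal to $\pi$, and $D^\pi_{KL}(P\|Q)=\sum_{x,y}\pi(x)P(x,y)\log\frac{P(x,y)}{Q(x,y)}$ with $0\log(0/a)=0$. *)

(* Defs.v *)
From HB Require Import structures.
From mathcomp Require Import all_boot all_order all_algebra.
From mathcomp Require Import reals exp.
Set Implicit Arguments. Unset Strict Implicit. Unset Printing Implicit Defensive.
Import Order.TTheory GRing.Theory Num.Theory.
Local Open Scope ring_scope.

Section Defs.
Variables (R : realType) (n : nat).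

(* a probability mass function on 'I_n (states 1..n are 0..n-1) *)
Definition is_pmf (pi : 'rV[R]_n) : Prop :=
  (forall x, 0 <= pi 0 x) /\ \sum_x pi 0 x = 1.

Definition full_support (pi : 'rV[R]_n) : Prop := forall x, 0 < pi 0 x.

Definition stochastic (P : 'M[R]_n) : Prop :=
  (forall x y, 0 <= P x y) /\ (forall x, \sum_y P x y = 1).

Definition in_S (pi : 'rV[R]_n) (P : 'M[R]_n) : Prop :=
  stochastic P /\ pi *m P = pi.

Definition massR (pi : 'rV[R]_n) (A : {set 'I_n}) : R := \sum_(z in A) pi 0 z.

(* Gibbs kernel of a partition, given by the block map x |-> O(x) *)
Definition gibbs_kernel (O : 'I_n -> {set 'I_n}) (pi : 'rV[R]_n) : 'M[R]_n :=
  \matrix_(x, y) (if y \in O x then pi 0 y / massR pi (O x) else 0).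

Definition PiM (pi : 'rV[R]_n) : 'M[R]_n := \matrix_(x, y) pi 0 y.

(* D^pi_KL(P || Q), with 0 log(0/a) = 0 *)
Definition KLpi (pi : 'rV[R]_n) (P Q : 'M[R]_n) : R :=
  \sum_x \sum_y (if P x y == 0 then 0
                 else pi 0 x * P x y * ln (P x y / Q x y)).

(* The partition O_i = {i} (i < k-1, 0-based), O_k = {k-1, ..., n-1} (0-based):
   block of x is the set of y with min(y, k-1) = min(x, k-1). *)
Definition blockk (k : nat) (x : 'I_n) : {set 'I_n} :=
  [set y : 'I_n | minn y k.-1 == minn x k.-1].

Definition lastblock (k : nat) : {set 'I_n} := [set z : 'I_n | k.-1 <= z]%N.

End Defs.

(* Main.v *)
Require Import Defs.
From HB Require Import structures.
From mathcomp Require Import all_boot all_order all_algebra.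
From mathcomp Require Import reals exp lra zify.
Import Order.TTheory GRing.Theory Num.Theory.
Local Open Scope ring_scope.
Set Implicit Arguments. Unset Strict Implicit. Unset Printing Implicit Defensive.
Lemma ln_le_sub1 (R : realType) (t : R) : 0 < t -> ln t <= t - 1.
Proof.
move=> t0; have := expR_ge1Dx (ln t); rewrite lnK ?posrE //; lra.
Qed.

Lemma ln_eq_sub1 (R : realType) (t : R) : 0 < t -> ln t = t - 1 -> t = 1.
Proof.
move=> t0 h.
set s := Num.sqrt t.
have s0 : 0 < s by rewrite sqrtr_gt0.
have ts : t = s ^+ 2 by rewrite sqr_sqrtr // ltW.
have h1 := ln_le_sub1 s0.
have : ln t = ln s *+ 2 by rewrite ts lnXn.
rewrite h ts => h2.
have h3 : (s - 1) ^+ 2 <= 0 by rewrite expr2; rewrite expr2 mulr2n in h2; nra.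
have : (s - 1) ^+ 2 == 0 by rewrite eq_le h3 sqr_ge0.
rewrite sqrf_eq0 subr_eq0 => /eqP ->; by rewrite expr1n.
Qed.
Definition klt (R : realType) (q p : R) := if q == 0 then 0 else q * ln (q / p).

Lemma klt_term (R : realType) (q p : R) : 0 <= q -> 0 < p ->
  q - p <= klt q p /\ (klt q p = q - p -> q = p).
Proof.
move=> q0 p0; rewrite /klt; have [->|qn0] := eqVneq q 0.
  split; first lra. move=> h; lra.
have qp : 0 < q by rewrite lt_def qn0.
set t := p / q.
have t0 : 0 < t by rewrite divr_gt0.
have qt : q * t = p by rewrite /t mulrCA divff // mulr1.
have e : ln (q / p) = - ln t by rewrite /t -lnV ?posrE // invf_div.
rewrite e; have h := ln_le_sub1 t0.
split.
  rewrite -qt; nra.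
move=> h2.
have : ln t = t - 1.
  apply: (mulfI qn0). rewrite -qt in h2. rewrite mulrBr mulr1; lra.
move=> /(ln_eq_sub1 t0) t1; rewrite -qt t1 mulr1 //.
Qed.

Lemma gibbs (R : realType) n (q p : 'I_n -> R) :
  (forall y, 0 <= q y) -> (forall y, 0 < p y) -> \sum_y q y = 1 -> \sum_y p y = 1 ->
  0 <= \sum_y klt (q y) (p y) /\ (\sum_y klt (q y) (p y) = 0 -> forall y, q y = p y).
Proof.
move=> q0 p0 sq sp.
have E : \sum_y klt (q y) (p y) = \sum_y (klt (q y) (p y) - (q y - p y)).
  by rewrite sumrB sumrB sq sp subrr subr0.
have nn : forall y, 0 <= klt (q y) (p y) - (q y - p y).
  by move=> y; rewrite subr_ge0; case: (klt_term (q0 y) (p0 y)).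
rewrite E; split; first by apply: sumr_ge0 => y _.
move=> /psumr_eq0P h y; have := h (fun i _ => nn i) y isT => /eqP; rewrite subr_eq0 => /eqP.
by case: (klt_term (q0 y) (p0 y)) => _; apply.
Qed.
Lemma blockE_small n k (x : 'I_n) : (x < k.-1)%N -> blockk k x = [set x].
Proof.
move=> hx; apply/setP => y; rewrite !inE; apply/eqP/eqP => [h|->] //.
apply/val_inj => /=; move: h; case: (leqP k.-1 y) => hy; lia.
Qed.

Lemma blockE_big n k (x : 'I_n) : (k.-1 <= x)%N -> blockk k x = lastblock n k.
Proof.
move=> hx; apply/setP => y; rewrite !inE; apply/eqP/idP => h; lia.
Qed.

Lemma mass_pos (R : realType) n (pi : 'rV[R]_n) (A : {set 'I_n}) x :
  (forall z, 0 < pi 0 z) -> x \in A -> 0 < massR pi A.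
Proof.
move=> hf xA; rewrite /massR (bigD1 x) //=.
have := hf x; have : 0 <= \sum_(i in A | i != x) pi 0 i.
  by apply: sumr_ge0 => i _; apply: ltW.
lra.
Qed.

Lemma Gentry (R : realType) n (pi : 'rV[R]_n) k x y :
  (forall z, 0 < pi 0 z) ->
  gibbs_kernel (blockk k) pi x y =
  if (x < k.-1)%N then (y == x)%:R
  else if (k.-1 <= y)%N then pi 0 y / massR pi (lastblock n k) else 0.
Proof.
move=> hf; rewrite mxE; case: ltnP => hx.
  rewrite blockE_small // in_set1 /massR big_set1; case: eqP => [->|] //.
  by rewrite divff // gt_eqF.
by rewrite blockE_big // inE.
Qed.

Lemma stoch_mul (R : realType) n (A B : 'M[R]_n) :
  stochastic A -> stochastic B -> stochastic (A *m B).
Proof.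
move=> [A0 A1] [B0 B1]; split.
  by move=> x y; rewrite mxE; apply: sumr_ge0 => a _; apply: mulr_ge0.
move=> x; under eq_bigr do rewrite mxE.
rewrite exchange_big /= -(A1 x); apply: eq_bigr => a _.
by rewrite -mulr_sumr B1 mulr1.
Qed.

Lemma stoch_G (R : realType) n (pi : 'rV[R]_n) k :
  (forall z, 0 < pi 0 z) -> stochastic (gibbs_kernel (blockk k) pi).
Proof.
move=> hf; have mp : forall x : 'I_n, 0 < massR pi (blockk k x).
  by move=> x; apply: (mass_pos hf (x := x)); rewrite inE.
split.
  move=> x y; rewrite mxE; case: ifP => _ //.
  by apply: divr_ge0; [apply: ltW | apply: ltW].
move=> x; under eq_bigr do rewrite mxE.
rewrite -big_mkcond /= -mulr_suml -/(massR pi _) divff //.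
by rewrite gt_eqF.
Qed.
Lemma GP_small (R : realType) n (pi : 'rV[R]_n) k (P : 'M[R]_n) (x b : 'I_n) :
  (forall z, 0 < pi 0 z) -> (x < k.-1)%N ->
  (gibbs_kernel (blockk k) pi *m P) x b = P x b.
Proof.
move=> hf hx; rewrite mxE (bigD1 x) //= Gentry // hx eqxx mul1r big1 ?addr0 //.
by move=> a /negbTE ha; rewrite Gentry // hx ha mul0r.
Qed.

Lemma GP_big (R : realType) n (pi : 'rV[R]_n) k (P : 'M[R]_n) (x b : 'I_n) :
  (forall z, 0 < pi 0 z) -> (k.-1 <= x)%N ->
  (gibbs_kernel (blockk k) pi *m P) x b =
  (\sum_(a in lastblock n k) pi 0 a * P a b) / massR pi (lastblock n k).
Proof.
move=> hf hx; rewrite mxE mulr_suml [RHS]big_mkcond /=; apply: eq_bigr => a _.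
rewrite Gentry // ltnNge hx /= inE; case: ifP => _; last by rewrite !mul0r.
by rewrite mulrAC.
Qed.

Lemma MG_small (R : realType) n (pi : 'rV[R]_n) k (M : 'M[R]_n) (x y : 'I_n) :
  (forall z, 0 < pi 0 z) -> (y < k.-1)%N ->
  (M *m gibbs_kernel (blockk k) pi) x y = M x y.
Proof.
move=> hf hy; rewrite mxE (bigD1 y) //= Gentry // hy eqxx mulr1 big1 ?addr0 //.
move=> b hb; rewrite Gentry //; case: ltnP => hb'.
  by rewrite eq_sym (negbTE hb) mulr0.
by rewrite leqNgt hy mulr0.
Qed.

Lemma MG_big (R : realType) n (pi : 'rV[R]_n) k (M : 'M[R]_n) (x y : 'I_n) :
  (forall z, 0 < pi 0 z) -> (k.-1 <= y)%N ->
  (M *m gibbs_kernel (blockk k) pi) x y =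
  (\sum_(b in lastblock n k) M x b) * pi 0 y / massR pi (lastblock n k).
Proof.
move=> hf hy; rewrite mxE -mulrA mulr_suml [RHS]big_mkcond /=; apply: eq_bigr => b _.
rewrite Gentry // inE hy; case: ltnP => hb /=.
  rewrite (_ : (y == b) = false) ?mulr0 //.
  by apply/eqP => e; move: hb; rewrite -e ltnNge hy.
by [].
Qed.

Lemma divE (R : realType) (S m a : R) : m != 0 -> (S / m = a <-> S = m * a).
Proof.
move=> m0; split => h.
  by rewrite -h mulrCA divff // mulr1.
by rewrite h mulrAC divff // mul1r.
Qed.

Lemma divE2 (R : realType) (S m c : R) : m != 0 -> c != 0 -> (S * c / m = c <-> S = m).
Proof.
move=> m0 c0; rewrite divE //; split => [h|->] //.
by apply: (mulIf c0).
Qed.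
Unset Implicit Arguments.
Theorem proposition7p2 (R : realType) (n : nat) (pi : 'rV[R]_n) (k : nat)
    (hpi : is_pmf pi) (hfull : full_support pi)
    (hmono : forall x y : 'I_n, (x <= y)%N -> pi 0 x <= pi 0 y)
    (hk1 : (1 <= k)%N) (hkn : (k <= n)%N)
    (P : 'M[R]_n) (hP : in_S pi P) :
  let G := gibbs_kernel (blockk k) pi in
  let Ok := lastblock n k in
  let conds :=
    [/\ (forall x y : 'I_n, (x < k.-1)%N -> (y < k.-1)%N -> P x y = pi 0 y),
        (forall x : 'I_n, (x < k.-1)%N -> \sum_(w in Ok) P x w = massR pi Ok),
        (forall y : 'I_n, (y < k.-1)%N ->
           \sum_(z in Ok) pi 0 z * P z y = massR pi Ok * pi 0 y)
      & \sum_(z in Ok) \sum_(w in Ok) pi 0 z * P z w = massR pi Ok ^+ 2] in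
  (KLpi pi (G *m P *m G) (PiM pi) = 0 <-> conds) /\
  (G *m P *m G = PiM pi <-> conds).
Proof.
move=> G Ok conds.
have hkn' : (k.-1 < n)%N by case: (k) hk1 hkn.
pose y0 : 'I_n := Ordinal hkn'.
have y0O : y0 \in Ok by rewrite inE.
have y0b : (k.-1 <= y0)%N by [].
have mpos : 0 < massR pi Ok by apply: (mass_pos hfull y0O).
have m0 : massR pi Ok != 0 by rewrite gt_eqF.
have p0 : forall z, pi 0 z != 0 by move=> z; rewrite gt_eqF.
set Q := G *m P *m G.
have Q_ss : forall x y : 'I_n, (x < k.-1)%N -> (y < k.-1)%N -> Q x y = P x y.
  by move=> x y hx hy; rewrite /Q MG_small // GP_small.
have Q_sb : forall x y : 'I_n, (x < k.-1)%N -> (k.-1 <= y)%N ->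
    Q x y = (\sum_(w in Ok) P x w) * pi 0 y / massR pi Ok.
  move=> x y hx hy; rewrite /Q MG_big //; congr (_ * _ / _).
  by apply: eq_bigr => b _; rewrite GP_small.
have Q_bs : forall x y : 'I_n, (k.-1 <= x)%N -> (y < k.-1)%N ->
    Q x y = (\sum_(z in Ok) pi 0 z * P z y) / massR pi Ok.
  by move=> x y hx hy; rewrite /Q MG_small // GP_big.
have Q_bb : forall x y : 'I_n, (k.-1 <= x)%N -> (k.-1 <= y)%N ->
    Q x y = ((\sum_(z in Ok) \sum_(w in Ok) pi 0 z * P z w) / massR pi Ok)
             * pi 0 y / massR pi Ok.
  move=> x y hx hy; rewrite /Q MG_big //; congr (_ * _ / _).
  rewrite exchange_big /= mulr_suml; apply: eq_bigr => b _.
  by rewrite GP_big.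
have eqv : Q = PiM pi <-> conds.
  split.
    move=> hQ; have hQ' : forall x y, Q x y = pi 0 y by move=> x y; rewrite hQ mxE.
    split.
    - by move=> x y hx hy; rewrite -Q_ss // hQ'.
    - move=> x hx; have := hQ' x y0; rewrite Q_sb // divE2 //.
    - move=> y hy; have := hQ' y0 y; rewrite Q_bs // divE //.
    - have := hQ' y0 y0; rewrite Q_bb // divE2 // divE // => ->; rewrite ?expr2.
  case=> c1 c2 c3 c4; apply/matrixP => x y; rewrite [PiM _ _ _]mxE.
  case: (ltnP x k.-1) => hx; case: (ltnP y k.-1) => hy.
  - by rewrite Q_ss // c1.
  - by rewrite Q_sb // c2 // divE2.
  - by rewrite Q_bs // c3 // divE.
  - by rewrite Q_bb // divE2 // c4 divE // expr2.
split => //.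
have hQs : stochastic Q.
  by apply: stoch_mul; [apply: stoch_mul; [apply: stoch_G | case: hP] | apply: stoch_G].
case: hQs => Q0 Q1.
have KLE : KLpi pi Q (PiM pi) = \sum_x pi 0 x * \sum_y klt (Q x y) (pi 0 y).
  apply: eq_bigr => x _; rewrite mulr_sumr; apply: eq_bigr => y _.
  rewrite /klt [PiM _ _ _]mxE; case: ifP => _; first by rewrite mulr0.
  by rewrite mulrA.
rewrite -eqv KLE; split; last first.
  move=> ->; apply: big1 => x _; apply/eqP; rewrite mulf_eq0; apply/orP; right.
  apply/eqP; apply: big1 => y _; rewrite [PiM _ _ _]mxE /klt; case: ifP => // _.
  by rewrite divff // ln1 mulr0.
case: hpi => pge psum.
have g := fun x => gibbs (q := fun y => Q x y) (p := fun y => pi 0 y) (Q0 x) hfull (Q1 x) psum.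
move=> /psumr_eq0P h.
have h' : forall x, pi 0 x * \sum_y klt (Q x y) (pi 0 y) = 0.
  move=> x; apply: h => // i _; apply: mulr_ge0 => //; by case: (g i).
apply/matrixP => x y; rewrite [PiM _ _ _]mxE; case: (g x) => _ H; apply: H.
by have /eqP := h' x; rewrite mulf_eq0 (negbTE (p0 x)) /= => /eqP.
Qed.
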